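(* Let $w,w'\in[0,1]$ with $w+w'=1$. If $\textbf{F}$ is a strongly convex and $gH$-differentiable IVF on a nonempty convex subset $\mathcal{X}$ of $\mathbb{R}^n$ with $gH$-Lipschitz gradient, then there exist $\sigma>0$ and $L>0$ such that \[(\mathcal{W}(\nabla\textbf{F}(x))-\mathcal{W}(\nabla\textbf{F}(y)))^T(x-y)\ge\frac{\sigma}{L^2}\lVert\mathcal{W}(\nabla\textbf{F}(x))-\mathcal{W}(\nabla\textbf{F}(y))\rVert^2\quad\text{for all }x,y\in\mathcal{X}.\]
   Context: $I(\mathbb{R})$: closed bounded intervals $\textbf{A}=[\underline{a},\overline{a}]$ with Moore arithmetic ($\oplus$ endpointwise; $\lambda\odot\textbf{A}=[\lambda\underline{a},\lambda\overline{a}]$ if $\lambda\ge0$, $[\lambda\overline{a},\lambda\underline{a}]$ if $\lambda<0$); $\textbf{A}\ominus_{gH}\textbf{B}=[\min\{\underline{a}-\underline{b},\overline{a}-\overline{b}\},\max\{\underline{a}-\underline{b},\overline{a}-\overline{b}\}]$ (componentwise on $I(\mathbb{R})^n$). $\textbf{A}\preceq\textbf{B}$ iff $\underline{a}\le\underline{b}$, $\overline{a}\le\overline{b}$. Norms: $\lVert\textbf{A}\rVert_{I(\mathbb{R})}=\max\{|\underline{a}|,|\overline{a}|\}$, $\lVert(\textbf{A}_i)\rVert_{I(\mathbb{R})^n}=\sum_i\lVert\textbf{A}_i\rVert_{I(\mathbb{R})}$, $\lVert\cdot\rVert$ Euclidean. $D_i\textbf{F}(x)=\lim_{h\to0}\frac1h\odot(\textbf{F}(x+he_i)\ominus_{gH}\textbf{F}(x))$,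 $\nabla\textbf{F}(x)=(D_1\textbf{F}(x),\dots,D_n\textbf{F}(x))^T$. Linear IVF: $\textbf{L}(x)=\bigoplus_i x_i\odot\textbf{L}(e_i)$. $\textbf{F}$ is $gH$-differentiable at $\bar{x}$ if there exist a linear IVF $\textbf{L}_{\bar{x}}$, an IVF $\textbf{E}(\textbf{F}(\bar{x});d)$ and $\delta>0$ with $(\textbf{F}(\bar{x}+d)\ominus_{gH}\textbf{F}(\bar{x}))\ominus_{gH}\textbf{L}_{\bar{x}}(d)=\lVert d\rVert\odot\textbf{E}(\textbf{F}(\bar{x});d)$ for $\lVert d\rVert<\delta$ and $\textbf{E}\to\textbf{0}$ as $\lVert d\rVert\to0$. Strongly convex: there exist a convex IVF $\textbf{G}$ (i.e. $\textbf{G}(\lambda x_1+(1-\lambda)x_2)\preceq\lambda\odot\textbf{G}(x_1)\oplus(1-\lambda)\odot\textbf{G}(x_2)$) and $\sigma>0$ with $\textbf{F}(x)=\textbf{G}(x)\oplus\frac12\lVert x\rVert^2\odot[\sigma,\sigma]$. $gH$-Lipschitz gradient: $\lVert\nabla\textbf{F}(x)\ominus_{gH}\nabla\textbf{F}(y)\rVert_{I(\mathbb{R})^n}\le M\lVert x-y\rVert$ for some $M>0$ and all $x,y$. $\mathcal{W}(\textbf{A}_1,\dots,\textbf{A}_n)=(w\underline{a}_1+w'\overline{a}_1,\dots,w\underline{a}_n+w'\overline{a}_n)^T$. *)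

(* Defs.v *)
From HB Require Import structures.
From mathcomp Require Import all_boot all_order all_algebra.
From mathcomp Require Import reals.
Set Implicit Arguments. Unset Strict Implicit. Unset Printing Implicit Defensive.
Import Order.TTheory GRing.Theory Num.Theory.
Local Open Scope ring_scope.

Section Intervals.
Variable R : realType.

Record itv := Itv { ilo : R; ihi : R; ilohi : ilo <= ihi }.

Lemma iadd_ok (A B : itv) : ilo A + ilo B <= ihi A + ihi B.
Proof. by apply: lerD; apply: ilohi. Qed.
Definition iadd (A B : itv) : itv := Itv (iadd_ok A B).

Lemma izero_ok : (0 : R) <= 0. Proof. by []. Qed.
Definition izero : itv := Itv izero_ok.

Lemma iscale_pos_ok (l : R) (A : itv) : 0 <= l -> l * ilo A <= l * ihi A.
Proof. by move=> hl; apply: ler_wpM2l => //; apply: ilohi. Qed.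
Lemma iscale_neg_ok (l : R) (A : itv) : ~~ (0 <= l) -> l * ihi A <= l * ilo A.
Proof.
move=> hl; apply: ler_wnM2l; last exact: ilohi.
by rewrite -ltNge in hl; apply: ltW.
Qed.
Definition iscale (l : R) (A : itv) : itv :=
  match boolP (0 <= l) with
  | AltTrue h => Itv (iscale_pos_ok A h)
  | AltFalse h => Itv (iscale_neg_ok A h)
  end.

Lemma igH_ok (A B : itv) :
  Num.min (ilo A - ilo B) (ihi A - ihi B) <= Num.max (ilo A - ilo B) (ihi A - ihi B).
Proof. by rewrite ge_min !le_max lexx. Qed.
Definition igH (A B : itv) : itv := Itv (igH_ok A B).

Definition ile (A B : itv) : Prop := ilo A <= ilo B /\ ihi A <= ihi B.

Definition inorm (A : itv) : R := Num.max `|ilo A| `|ihi A|.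

Lemma ipoint_ok (s : R) : s <= s. Proof. exact: lexx. Qed.
Definition ipoint (s : R) : itv := Itv (ipoint_ok s).

Variable n : nat.

Definition igHn (A B : 'I_n -> itv) : 'I_n -> itv := fun i => igH (A i) (B i).
Definition inormn (A : 'I_n -> itv) : R := \sum_(i < n) inorm (A i).

Definition dotv (x y : 'rV[R]_n) : R := \sum_(i < n) x 0 i * y 0 i.
Definition enorm (x : 'rV[R]_n) : R := Num.sqrt (\sum_(i < n) x 0 i ^+ 2).

Definition evec (i : 'I_n) : 'rV[R]_n := delta_mx 0 i.

Definition linIVF (c : 'I_n -> itv) (x : 'rV[R]_n) : itv :=
  \big[iadd/izero]_(i < n) iscale (x 0 i) (c i).

Definition is_partial (F : 'rV[R]_n -> itv) (x : 'rV[R]_n) (i : 'I_n) (A : itv)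
  : Prop :=
  forall eps : R, 0 < eps -> exists2 delta : R, 0 < delta &
    forall h : R, h != 0 -> `|h| < delta ->
      inorm (igH (iscale h^-1 (igH (F (x + h *: evec i)) (F x))) A) < eps.

Definition is_grad (F : 'rV[R]_n -> itv) (x : 'rV[R]_n) (g : 'I_n -> itv) : Prop :=
  forall i, is_partial F x i (g i).

Definition gH_differentiable_at (F : 'rV[R]_n -> itv) (xb : 'rV[R]_n) : Prop :=
  exists (c : 'I_n -> itv) (E : 'rV[R]_n -> itv) (delta : R),
    [/\ 0 < delta,
        (forall d, enorm d < delta ->
           igH (igH (F (xb + d)) (F xb)) (linIVF c d) = iscale (enorm d) (E d))
      & (forall eps : R, 0 < eps -> exists2 eta : R, 0 < eta &
           forall d, 0 < enorm d < eta -> inorm (E d) < eps)].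

Definition convex_set (X : 'rV[R]_n -> Prop) : Prop :=
  forall x1 x2 (l : R), X x1 -> X x2 -> 0 <= l <= 1 ->
    X (l *: x1 + (1 - l) *: x2).

Definition convex_IVF_on (X : 'rV[R]_n -> Prop) (G : 'rV[R]_n -> itv) : Prop :=
  forall x1 x2 (l : R), X x1 -> X x2 -> 0 <= l <= 1 ->
    ile (G (l *: x1 + (1 - l) *: x2)) (iadd (iscale l (G x1)) (iscale (1 - l) (G x2))).

Definition strongly_convex_on (X : 'rV[R]_n -> Prop) (F : 'rV[R]_n -> itv) : Prop :=
  exists (G : 'rV[R]_n -> itv) (sigma : R),
    [/\ convex_IVF_on X G, 0 < sigma &
        forall x, X x -> F x = iadd (G x) (iscale (2^-1 * enorm x ^+ 2) (ipoint sigma))].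

Definition gH_Lipschitz_grad_on (X : 'rV[R]_n -> Prop) (F : 'rV[R]_n -> itv) : Prop :=
  exists2 M : R, 0 < M &
    forall x y gx gy, X x -> X y -> is_grad F x gx -> is_grad F y gy ->
      inormn (igHn gx gy) <= M * enorm (x - y).

Definition Wmap (w w' : R) (A : 'I_n -> itv) : 'rV[R]_n :=
  \row_(i < n) (w * ilo (A i) + w' * ihi (A i)).

End Intervals.

(* Main.v *)
Require Import Defs.
From HB Require Import structures.
From mathcomp Require Import all_boot all_order all_algebra.
From mathcomp Require Import reals boolp classical_sets.
From mathcomp Require Import ring lra.
Import Order.TTheory GRing.Theory Num.Theory.
Local Open Scope ring_scope.
Set Implicit Arguments. Unset Strict Implicit. Unset Printing Implicit Defensive.

Section Basics.
Variable R : realType.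
Implicit Types A B C : itv R.

Lemma ilo_iscale (l : R) A : ilo (iscale l A) = Num.min (l * ilo A) (l * ihi A).
Proof.
rewrite /iscale; destruct (boolP (0 <= l)) as [h|h] => /=.
  by rewrite min_l // ler_wpM2l // ilohi.
rewrite min_r // ler_wnM2l ?ilohi //; rewrite -ltNge in h; exact: ltW.
Qed.
Lemma ihi_iscale (l : R) A : ihi (iscale l A) = Num.max (l * ilo A) (l * ihi A).
Proof.
rewrite /iscale; destruct (boolP (0 <= l)) as [h|h] => /=.
  by rewrite max_r // ler_wpM2l // ilohi.
rewrite max_l // ler_wnM2l ?ilohi //; rewrite -ltNge in h; exact: ltW.
Qed.
Lemma inorm_igH A B : inorm (igH A B) = Num.max `|ilo A - ilo B| `|ihi A - ihi B|.
Proof.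
rewrite /inorm /=; case: (leP (ilo A - ilo B) (ihi A - ihi B)) => h.
  by [].
by rewrite maxC.
Qed.
Lemma inorm_ge0 A : 0 <= inorm A.
Proof. by rewrite /inorm le_max normr_ge0. Qed.

Lemma inorm_iscale (l : R) A : 0 <= l -> inorm (iscale l A) = l * inorm A.
Proof.
move=> hl; rewrite /inorm ilo_iscale ihi_iscale.
have h : l * ilo A <= l * ihi A by rewrite ler_wpM2l // ilohi.
rewrite (min_idPl h) (max_idPr h) !normrM (ger0_norm hl) maxr_pMr //.
Qed.

Lemma dist_lo A B : `|ilo A - ilo B| <= inorm (igH A B).
Proof. by rewrite inorm_igH le_max lexx. Qed.
Lemma dist_hi A B : `|ihi A - ihi B| <= inorm (igH A B).
Proof. by rewrite inorm_igH le_max lexx orbT. Qed.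

Lemma igH_lo A B : ilo (igH A B) = Num.min (ilo A - ilo B) (ihi A - ihi B).
Proof. by []. Qed.
Lemma igH_hi A B : ihi (igH A B) = Num.max (ilo A - ilo B) (ihi A - ihi B).
Proof. by []. Qed.

Lemma width_igH A B : ihi (igH A B) - ilo (igH A B) =
  `|(ihi A - ilo A) - (ihi B - ilo B)|.
Proof.
rewrite igH_lo igH_hi; case: (leP (ilo A - ilo B) (ihi A - ihi B)) => h.
  rewrite ger0_norm; first by ring.
  lra.
rewrite ler0_norm; first by ring.
lra.
Qed.

Lemma width_dist A B : `|(ihi A - ilo A) - (ihi B - ilo B)| <= 2 * inorm (igH A B).
Proof.
have h1 := dist_lo A B; have h2 := dist_hi A B.
have e : (ihi A - ilo A) - (ihi B - ilo B) = (ihi A - ihi B) - (ilo A - ilo B) by ring.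
rewrite e; apply: (le_trans (ler_normB _ _)); lra.
Qed.

Variable n : nat.
Implicit Types (c : 'I_n -> itv R) (d v : 'rV[R]_n).

Lemma ilo_linIVF c d : ilo (linIVF c d) =
  \sum_(i < n) Num.min (d 0 i * ilo (c i)) (d 0 i * ihi (c i)).
Proof.
rewrite /linIVF (big_morph (@ilo R) (id1 := 0) (op1 := +%R)) //.
by apply: eq_bigr => i _; rewrite ilo_iscale.
Qed.
Lemma ihi_linIVF c d : ihi (linIVF c d) =
  \sum_(i < n) Num.max (d 0 i * ilo (c i)) (d 0 i * ihi (c i)).
Proof.
rewrite /linIVF (big_morph (@ihi R) (id1 := 0) (op1 := +%R)) //.
by apply: eq_bigr => i _; rewrite ihi_iscale.
Qed.

Lemma width_linIVF c d : ihi (linIVF c d) - ilo (linIVF c d) =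
  \sum_(i < n) `|d 0 i| * (ihi (c i) - ilo (c i)).
Proof.
rewrite ilo_linIVF ihi_linIVF -sumrB; apply: eq_bigr => i _.
have h := ilohi (c i).
have e : forall a b : R, Num.max a b - Num.min a b = `|a - b|.
  move=> a b; case: (leP a b) => hab.
    by rewrite distrC ger0_norm ?subr_ge0.
  have hab' : 0 < a - b by rewrite subr_gt0.
  by rewrite (gtr0_norm hab').
rewrite e -mulrBr normrM [`|ilo _ - _|]distrC [`|ihi _ - _|]ger0_norm ?subr_ge0 //.
Qed.

Lemma ilo_linIVF_pos c v (s : R) : 0 <= s ->
  ilo (linIVF c (s *: v)) = s * \sum_(i < n) Num.min (v 0 i * ilo (c i)) (v 0 i * ihi (c i)).
Proof.
move=> hs; rewrite ilo_linIVF mulr_sumr; apply: eq_bigr => i _.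
by rewrite mxE -!mulrA minr_pMr.
Qed.
Lemma ihi_linIVF_pos c v (s : R) : 0 <= s ->
  ihi (linIVF c (s *: v)) = s * \sum_(i < n) Num.max (v 0 i * ilo (c i)) (v 0 i * ihi (c i)).
Proof.
move=> hs; rewrite ihi_linIVF mulr_sumr; apply: eq_bigr => i _.
by rewrite mxE -!mulrA maxr_pMr.
Qed.
Lemma ilo_linIVF_neg c v (s : R) : s <= 0 ->
  ilo (linIVF c (s *: v)) = s * \sum_(i < n) Num.max (v 0 i * ilo (c i)) (v 0 i * ihi (c i)).
Proof.
move=> hs; rewrite ilo_linIVF mulr_sumr; apply: eq_bigr => i _.
by rewrite mxE -!mulrA maxr_nMr.
Qed.
Lemma ihi_linIVF_neg c v (s : R) : s <= 0 ->
  ihi (linIVF c (s *: v)) = s * \sum_(i < n) Num.min (v 0 i * ilo (c i)) (v 0 i * ihi (c i)).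
Proof.
move=> hs; rewrite ihi_linIVF mulr_sumr; apply: eq_bigr => i _.
by rewrite mxE -!mulrA minr_nMr.
Qed.

Lemma enorm_ge0 v : 0 <= enorm v.
Proof. exact: sqrtr_ge0. Qed.
Lemma sum_sq_ge0 v : 0 <= \sum_(i < n) v 0 i ^+ 2.
Proof. by apply: sumr_ge0 => i _; rewrite sqr_ge0. Qed.
Lemma enorm_sq v : enorm v ^+ 2 = \sum_(i < n) v 0 i ^+ 2.
Proof. by rewrite /enorm sqr_sqrtr // sum_sq_ge0. Qed.
Lemma enormZ (k : R) v : enorm (k *: v) = `|k| * enorm v.
Proof.
rewrite /enorm.
have -> : \sum_(i < n) (k *: v) 0 i ^+ 2 = k ^+ 2 * \sum_(i < n) v 0 i ^+ 2.
  by rewrite mulr_sumr; apply: eq_bigr => i _; rewrite mxE exprMn.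
by rewrite sqrtrM ?sqr_ge0 // sqrtr_sqr.
Qed.
Lemma abs_le_enorm v i : `|v 0 i| <= enorm v.
Proof.
rewrite /enorm -sqrtr_sqr ler_sqrt ?sum_sq_ge0 //.
rewrite (bigD1 i) //= lerDl; apply: sumr_ge0 => j _; exact: sqr_ge0.
Qed.
Lemma enorm0_eq v : enorm v = 0 -> v = 0.
Proof.
move=> /eqP; rewrite /enorm sqrtr_eq0 => h.
have h0 : \sum_(i < n) v 0 i ^+ 2 = 0.
  apply/eqP; rewrite eq_le h sum_sq_ge0 //.
apply/matrixP => a b; rewrite ord1 mxE.
have := psumr_eq0P (fun i _ => sqr_ge0 (v 0 i)) h0.
move=> /(_ b isT) /eqP; rewrite sqrf_eq0 => /eqP -> //.
Qed.

Lemma sum_ge_one (f : 'I_n -> R) i : (forall i, 0 <= f i) -> f i <= \sum_(j < n) f j.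
Proof.
move=> hf; rewrite (bigD1 i) //= lerDl; exact: sumr_ge0.
Qed.

Lemma sum_sq_le (f : 'I_n -> R) : (forall i, 0 <= f i) ->
  \sum_(i < n) f i ^+ 2 <= (\sum_(i < n) f i) ^+ 2.
Proof.
move=> hf; rewrite expr2 mulr_suml; apply: ler_sum => i _.
by rewrite expr2 ler_wpM2l // sum_ge_one.
Qed.

End Basics.
Section GH.
Variable R : realType.
Variable n : nat.
Variable F : 'rV[R]_n -> itv R.
Implicit Types (c : 'I_n -> itv R) (d v z : 'rV[R]_n).

Definition GHP z c := forall e : R, 0 < e -> exists2 eta : R, 0 < eta &
  forall d, enorm d < eta ->
    inorm (igH (igH (F (z + d)) (F z)) (linIVF c d)) <= e * enorm d.

Lemma linIVF0 c : ilo (linIVF c 0) = 0 /\ ihi (linIVF c 0) = 0.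
Proof.
rewrite ilo_linIVF ihi_linIVF; split; apply: big1 => i _; rewrite mxE mul0r.
  by rewrite mul0r minxx.
by rewrite mul0r maxxx.
Qed.

Lemma gh_GHP z : gH_differentiable_at F z -> exists c, GHP z c.
Proof.
move=> [c [E [delta [hd hE hlim]]]]; exists c => e he.
have [eta heta H] := hlim e he.
exists (Num.min delta eta); first by rewrite lt_min hd heta.
move=> d; rewrite lt_min => /andP [h1 h2].
have [d0|dpos] := eqVneq (enorm d) 0.
  rewrite d0 mulr0; have -> := enorm0_eq d0.
  rewrite inorm_igH addr0 /= !subrr.
  have [-> ->] := linIVF0 c.
  by rewrite minxx maxxx subrr normr0 maxxx.
have dp : 0 < enorm d by rewrite lt_neqAle eq_sym dpos enorm_ge0.
rewrite hE // inorm_iscale ?enorm_ge0 // mulrC ler_wpM2r ?enorm_ge0 //.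
by apply: ltW; apply: H; rewrite dp.
Qed.

Lemma evec_sum_min c i :
  \sum_(j < n) Num.min (evec R i 0 j * ilo (c j)) (evec R i 0 j * ihi (c j)) = ilo (c i).
Proof.
rewrite (bigD1 i) //= big1 ?addr0.
  by rewrite /evec mxE !eqxx /= !mul1r min_l // ilohi.
move=> j hj; rewrite /evec mxE eqxx /= (negbTE hj) /= !mul0r minxx //.
Qed.
Lemma evec_sum_max c i :
  \sum_(j < n) Num.max (evec R i 0 j * ilo (c j)) (evec R i 0 j * ihi (c j)) = ihi (c i).
Proof.
rewrite (bigD1 i) //= big1 ?addr0.
  by rewrite /evec mxE !eqxx /= !mul1r max_r // ilohi.
move=> j hj; rewrite /evec mxE eqxx /= (negbTE hj) /= !mul0r maxxx //.
Qed.
Lemma enorm_evec (i : 'I_n) : enorm (evec R i) = 1.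
Proof.
rewrite /enorm (bigD1 i) //= big1 ?addr0.
  by rewrite /evec mxE !eqxx /= expr1n sqrtr1.
move=> j hj; rewrite /evec mxE eqxx /= (negbTE hj) /= expr0n //.
Qed.

Lemma scale_aux (h e a p : R) : h != 0 -> `|a - h * p| <= e * `|h| -> `|a * h^-1 - p| <= e.
Proof.
move=> hn H.
have -> : a * h^-1 - p = (a - h * p) * h^-1 by field.
rewrite normrM normfV ler_pdivrMr ?normr_gt0 //.
Qed.

Lemma GHP_grad z c : GHP z c -> is_grad F z c.
Proof.
move=> H i eps heps.
have [eta heta Hd] := H (eps / 2) (divr_gt0 heps (ltr0Sn _ 1)).
exists eta => // h hn hlt.
have := Hd (h *: evec R i); rewrite enormZ enorm_evec mulr1 => /(_ hlt) Hb.
set D := igH (F (z + h *: evec R i)) (F z).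
set L := linIVF c (h *: evec R i).
have h1 := le_trans (dist_lo D L) Hb.
have h2 := le_trans (dist_hi D L) Hb.
have hD := ilohi D.
have hc := ilohi (c i).
have he2 : eps / 2 < eps by rewrite ltr_pdivrMr // ltr_pMr // ltr1n.
rewrite inorm_igH ilo_iscale ihi_iscale.
case: (ltP 0 h) => hs.
  have hk : 0 <= h^-1 by rewrite invr_ge0 ltW.
  rewrite -minr_pMr // -maxr_pMr // (min_idPl hD) (max_idPr hD) mulrC [h^-1 * _]mulrC.
  rewrite /L (ilo_linIVF_pos _ _ (ltW hs)) evec_sum_min in h1.
  rewrite /L (ihi_linIVF_pos _ _ (ltW hs)) evec_sum_max in h2.
  rewrite gt_max; apply/andP; split; apply: (le_lt_trans _ he2); exact: scale_aux.
have hs' : h < 0 by rewrite lt_neqAle hn hs.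
have hk : h^-1 <= 0 by rewrite invr_le0.
rewrite -(maxr_nMr _ _ hk) -(minr_nMr _ _ hk) (min_idPl hD) (max_idPr hD) mulrC [h^-1 * _]mulrC.
rewrite /L (ilo_linIVF_neg _ _ hs) evec_sum_max in h1.
rewrite /L (ihi_linIVF_neg _ _ hs) evec_sum_min in h2.
rewrite gt_max; apply/andP; split; apply: (le_lt_trans _ he2); exact: scale_aux.
Qed.

Lemma width_rel (A B C : itv R) :
  `| `|(ihi A - ilo A) - (ihi B - ilo B)| - (ihi C - ilo C)| <= 2 * inorm (igH (igH A B) C).
Proof. by rewrite -width_igH; apply: width_dist. Qed.

End GH.
Section SC.
Variable R : realType.
Variable n : nat.
Implicit Types (z : 'rV[R]_n).

Lemma qid (l : R) z1 z2 : enorm (l *: z1 + (1 - l) *: z2) ^+ 2 =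
  l * enorm z1 ^+ 2 + (1 - l) * enorm z2 ^+ 2 - l * (1 - l) * enorm (z1 - z2) ^+ 2.
Proof.
rewrite !enorm_sq !mulr_sumr -big_split /= -sumrB; apply: eq_bigr => i _.
rewrite !mxE; ring.
Qed.

Lemma SC_lohi (X : 'rV[R]_n -> Prop) (F : 'rV[R]_n -> itv R) :
  convex_set X -> strongly_convex_on X F ->
  exists2 sg : R, 0 < sg & forall z1 z2 (l : R), X z1 -> X z2 -> 0 <= l <= 1 ->
  ilo (F (l *: z1 + (1 - l) *: z2)) <= l * ilo (F z1) + (1 - l) * ilo (F z2)
       - sg / 2 * (l * (1 - l)) * enorm (z1 - z2) ^+ 2 /\
  ihi (F (l *: z1 + (1 - l) *: z2)) <= l * ihi (F z1) + (1 - l) * ihi (F z2)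
       - sg / 2 * (l * (1 - l)) * enorm (z1 - z2) ^+ 2.
Proof.
move=> hX [G [sg [hG hsg hF]]]; exists sg => // z1 z2 l h1 h2 hl.
have hc := hX z1 z2 l h1 h2 hl.
have [hlo hhi] := hG z1 z2 l h1 h2 hl.
have hl0 : 0 <= l by case/andP: hl.
have hl1 : 0 <= 1 - l by case/andP: hl => _; rewrite subr_ge0.
move: hlo hhi; rewrite /= !ilo_iscale !ihi_iscale.
rewrite (min_idPl (ler_wpM2l hl0 (ilohi (G z1)))) (min_idPl (ler_wpM2l hl1 (ilohi (G z2)))).
rewrite (max_idPr (ler_wpM2l hl0 (ilohi (G z1)))) (max_idPr (ler_wpM2l hl1 (ilohi (G z2)))).
move=> hlo hhi.
rewrite !hF // /= !ilo_iscale !ihi_iscale /= minxx maxxx minxx maxxx minxx maxxx qid.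
split; lra.
Qed.
End SC.
Section RealAux.
Variable R : realType.

Lemma small_zero (x K : R) : 0 <= K -> (forall eta : R, 0 < eta -> `|x| <= K * eta) -> x = 0.
Proof.
move=> hK H; apply/eqP; apply: contraT => hx.
have hx0 : 0 < `|x| by rewrite normr_gt0.
have he : 0 < `|x| / (2 * (K + 1)) by apply: divr_gt0 => //; lra.
have := H _ he.
have hK1 : 0 < 2 * (K + 1) by lra.
have : K * (`|x| / (2 * (K + 1))) < `|x|.
  rewrite mulrA ltr_pdivrMr //; nra.
move=> h1 h2; lra.
Qed.

Lemma mono_switch_core (Phi A B : R -> R) (K kap : R) : 0 <= K ->
  (forall t, 0 <= t <= 1 -> Phi t = A t \/ Phi t = B t) ->
  (forall t1 t2, 0 <= t1 -> t1 <= t2 -> t2 <= 1 -> A t1 + kap * (t2 - t1) <= A t2) ->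
  (forall t1 t2, 0 <= t1 -> t1 <= t2 -> t2 <= 1 -> B t1 + kap * (t2 - t1) <= B t2) ->
  (forall t t', 0 <= t <= 1 -> 0 <= t' <= 1 ->
     `|(Phi t - A t) - (Phi t' - A t')| <= K * `|t - t'|) ->
  (forall t t', 0 <= t <= 1 -> 0 <= t' <= 1 ->
     `|(Phi t - B t) - (Phi t' - B t')| <= K * `|t - t'|) ->
  Phi 0 = B 0 -> Phi 0 + kap <= Phi 1.
Proof.
move=> hK hAB hA hB hLA hLB h0.
pose S : set R := fun t => 0 <= t <= 1 /\ Phi t = B t.
have S0 : S 0 by split => //; rewrite lexx ler01.
have hS : has_sup S.
  split; first by exists 0.
  by exists 1 => t [/andP [_ ?] _].
set tau := sup S.
have tau0 : 0 <= tau by apply: sup_upper_bound.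
have tau1 : tau <= 1 by apply: ge_sup; [exists 0 | move=> t [/andP [_ ?] _]].
have htau : 0 <= tau <= 1 by rewrite tau0 tau1.
have PB : Phi tau = B tau.
  apply/eqP; rewrite -subr_eq0; apply/eqP; apply: (small_zero hK) => eta heta.
  have [t [/andP [t0 t1] ht] htl] := sup_adherent heta hS.
  have htu : t <= tau by apply: sup_upper_bound => //; split => //; rewrite t0.
  have := hLB tau t htau; rewrite t0 t1 => /(_ isT).
  rewrite ht subrr subr0 => h; apply: (le_trans h); rewrite ler_wpM2l //.
  rewrite ger0_norm ?subr_ge0 //; rewrite -/tau in htl; lra.
case: (leP 1 tau) => ht1.
  have e1 : tau = 1 by apply/eqP; rewrite eq_le tau1 ht1.
  rewrite -e1 PB h0; have := hB 0 tau (lexx 0) tau0 tau1; rewrite e1 subr0 mulr1 //.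
have PA : forall t, tau < t -> t <= 1 -> Phi t = A t.
  move=> t ht htt.
  have ht0 : 0 <= t := ltW (le_lt_trans tau0 ht).
  have htb : 0 <= t <= 1 by rewrite ht0 htt.
  have [//|hb] := hAB t htb.
  have : t <= tau by apply: sup_upper_bound => //; split.
  lra.
have PAt : Phi tau = A tau.
  apply/eqP; rewrite -subr_eq0; apply/eqP; apply: (small_zero hK) => eta heta.
  pose t := Num.min 1 (tau + eta).
  have htt : tau < t by rewrite lt_min ht1 ltrDl heta.
  have htl : t <= 1 by rewrite ge_min lexx.
  have htg : t <= tau + eta by rewrite ge_min lexx orbT.
  have ht0 : 0 <= t by lra.
  have := hLA tau t htau; rewrite ht0 htl => /(_ isT).
  rewrite (PA t htt htl) subrr subr0 => h; apply: (le_trans h); rewrite ler_wpM2l //.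
  rewrite distrC ger0_norm ?subr_ge0; lra.
have := hA tau 1 tau0 tau1 (lexx 1).
have := hB 0 tau (lexx 0) tau0 tau1.
rewrite (PA 1 ht1 (lexx 1)) h0; rewrite PAt in PB; rewrite -PB.
move=> h1 h2; lra.
Qed.

Lemma mono_switch (Phi A B : R -> R) (K kap : R) : 0 <= K ->
  (forall t, 0 <= t <= 1 -> Phi t = A t \/ Phi t = B t) ->
  (forall t1 t2, 0 <= t1 -> t1 <= t2 -> t2 <= 1 -> A t1 + kap * (t2 - t1) <= A t2) ->
  (forall t1 t2, 0 <= t1 -> t1 <= t2 -> t2 <= 1 -> B t1 + kap * (t2 - t1) <= B t2) ->
  (forall t t', 0 <= t <= 1 -> 0 <= t' <= 1 ->
     `|(Phi t - A t) - (Phi t' - A t')| <= K * `|t - t'|) ->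
  (forall t t', 0 <= t <= 1 -> 0 <= t' <= 1 ->
     `|(Phi t - B t) - (Phi t' - B t')| <= K * `|t - t'|) ->
  Phi 0 + kap <= Phi 1.
Proof.
move=> hK hAB hA hB hLA hLB.
have h01 : 0 <= (0:R) <= 1 by apply/andP; split; [exact: lexx | exact: ler01].
have [h|h] := hAB 0 h01.
  apply: (mono_switch_core (A := B) (B := A) hK) => //.
  by move=> t ht; case: (hAB t ht); [right|left].
exact: (mono_switch_core hK hAB hA hB hLA hLB).
Qed.

Lemma close_pair (al be : R) (T : nat -> R -> Prop) (r : nat -> R) :
  al < be -> (forall m, 0 < r m) -> (forall t, al <= t <= be -> exists m, T m t) ->
  exists m t t', [/\ T m t, T m t', al <= t, t < t' & t' < t + r m] /\ t' <= be.
Proof.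
move=> hab hr hcov.
case: (pselect (exists m t t', [/\ T m t, T m t', al <= t, t < t' & t' < t + r m] /\ t' <= be)) => // Hn.
exfalso.
have H : forall m t t', T m t -> T m t' -> al <= t -> t < t' -> t' <= be -> t + r m <= t'.
  move=> m t t' h1 h2 h3 h4 h5; case: (leP (t + r m) t') => // h6.
  by exfalso; apply: Hn; exists m, t, t'; split.
pose step (m : nat) (ab : R * R) : R * R :=
  let L := Num.min (ab.2 - ab.1) (r m) / 4 in
  if pselect (exists t, T m t /\ ab.1 <= t <= ab.1 + L)
  then (ab.1 + 2 * L, ab.1 + 3 * L) else (ab.1, ab.1 + L).
have hstep : forall m ab, al <= ab.1 -> ab.1 < ab.2 -> ab.2 <= be ->
   [/\ ab.1 <= (step m ab).1, (step m ab).1 < (step m ab).2, (step m ab).2 <= ab.2 &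
     forall t, (step m ab).1 <= t <= (step m ab).2 -> ~ T m t].
  move=> m [a b] /= ha hab' hb; rewrite /step /=.
  set L := Num.min (b - a) (r m) / 4.
  have hrm := hr m.
  have hL : 0 < L by rewrite /L divr_gt0 // lt_min subr_gt0 hab' hrm.
  have hL2 : 4 * L <= b - a by rewrite /L mulrC divfK ?ge_min ?lexx // pnatr_eq0.
  have hL3 : 4 * L <= r m by rewrite /L mulrC divfK ?ge_min ?lexx ?orbT // pnatr_eq0.
  case: pselect => [[t0 [hT0 /andP [h1 h2]]] | hno] /=.
    split; try lra.
    move=> t /andP [h3 h4] hT.
    have := H m t0 t hT0 hT; lra.
  split; try lra.
  move=> t ht hT; apply: hno; exists t; split => //.
pose seqI := fix f (m : nat) : R * R := match m with 0 => (al, be) | m'.+1 => step m' (f m') end.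
have inv : forall m, [/\ al <= (seqI m).1, (seqI m).1 < (seqI m).2 & (seqI m).2 <= be].
  elim => [|m [h1 h2 h3]] /=; first by split => //; rewrite lexx.
  have [h4 h5 h6 _] := hstep m (seqI m) h1 h2 h3.
  split => //; lra.
have mono : forall m k, (seqI m).1 <= (seqI (m + k)%N).1 /\ (seqI (m + k)%N).2 <= (seqI m).2.
  move=> m; elim => [|k [h1 h2]]; first by rewrite addn0 !lexx.
  rewrite addnS /=.
  have [i1 i2 i3] := inv (m + k)%N.
  have [h4 h5 h6 _] := hstep (m + k)%N (seqI (m + k)%N) i1 i2 i3.
  split; lra.
have ub : forall k m, (seqI k).1 <= (seqI m).2.
  move=> k m; pose N := maxn k m.
  have [h1 _] := mono k (N - k)%N.
  have [_ h2] := mono m (N - m)%N.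
  rewrite subnKC ?leq_maxl // in h1.
  rewrite subnKC ?leq_maxr // in h2.
  have [_ h3 _] := inv N.
  lra.
pose E : set R := fun x => exists k, x = (seqI k).1.
have hE : has_sup E.
  split; first by exists (seqI 0%N).1; exists 0%N.
  by exists be => x [k ->]; have [_ h1 h2] := inv k; lra.
set x := sup E.
have xge : forall k, (seqI k).1 <= x by move=> k; apply: sup_upper_bound => //; exists k.
have xle : forall m, x <= (seqI m).2.
  move=> m; apply: ge_sup; first by exists (seqI 0%N).1; exists 0%N.
  by move=> y [k ->]; apply: ub.
have hx : al <= x <= be.
  have := xge 0%N; have := xle 0%N => /= h1 h2; rewrite h1 andbT //.
have [m hm] := hcov x hx.
have [i1 i2 i3] := inv m.
have [_ _ _ h4] := hstep m (seqI m) i1 i2 i3.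
apply: (h4 x) => //.
have := xge m.+1; have := xle m.+1 => /= h5 h6; rewrite h5 h6 //.
Qed.

End RealAux.
Section DichAux.
Variable R : realType.

Lemma abs_cases (al be : R) :
  `|al - be| = `|al| + `|be| \/ `|al - be| = `|al| - `|be| \/ `|al - be| = `|be| - `|al|.
Proof.
case: (leP 0 al) => ha; case: (leP 0 be) => hb.
- case: (leP be al) => hab.
    right; left; rewrite (ger0_norm ha) (ger0_norm hb) ger0_norm //; lra.
  right; right; rewrite (ger0_norm ha) (ger0_norm hb) ler0_norm; lra.
- left; rewrite (ger0_norm ha) (ltr0_norm hb) ger0_norm; lra.
- left; rewrite (ltr0_norm ha) (ger0_norm hb) ltr0_norm; lra.
- case: (leP be al) => hab.
    right; right; rewrite (ltr0_norm ha) (ltr0_norm hb) ger0_norm; lra.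
  right; left; rewrite (ltr0_norm ha) (ltr0_norm hb) ltr0_norm; lra.
Qed.

Lemma dich_alg (al be X1 X2 X3 X3' E1 E2 E3 E4 g : R) :
  `| `|al| - X1| <= E1 -> `| `|be| - X2| <= E2 -> `| `|al - be| - X3'| <= E3 ->
  `|X3' - X3| <= E4 ->
  g <= X1 + X2 - X3 -> g <= X3 - (X1 - X2) -> g <= X3 - (X2 - X1) ->
  E1 + E2 + E3 + E4 < g -> False.
Proof.
rewrite !ler_norml => /andP [a1 a2] /andP [b1 b2] /andP [c1 c2] /andP [d1 d2] g1 g2 g3 hE.
have := abs_cases al be; case=> [e|[e|e]]; rewrite e in c1 c2; lra.
Qed.

Variable n : nat.

Lemma split3 (f : 'I_n -> R) j k : j != k ->
  \sum_(i < n) f i = f j + f k + \sum_(i < n | (i != j) && (i != k)) f i.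
Proof.
move=> hjk; rewrite (bigD1 j) //= (bigD1 k) /=; last by rewrite eq_sym.
by rewrite addrA.
Qed.

End DichAux.

Section DichAux2.
Variable R : realType.

Lemma pos_add1 (S : R) : 0 <= S -> 0 < S + 1.
Proof. move=> h; lra. Qed.

Lemma lt3 (r A B C iv : R) : 0 <= r -> 0 <= A -> 0 <= B -> 0 <= C -> r * (A + B + C) < iv ->
  [/\ r * A < iv, r * B < iv & r * C < iv].
Proof.
move=> hr hA hB hC h.
have := mulr_ge0 hr hA; have := mulr_ge0 hr hB; have := mulr_ge0 hr hC.
move=> h1 h2 h3; split; lra.
Qed.

Lemma lt_drop1 (r S iv : R) : 0 <= r -> r * (S + 1) < iv -> r * S < iv.
Proof. move=> h1 h2; lra. Qed.

Lemma lt_sub (t t' r : R) : t' < t + r -> t' - t < r.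
Proof. move=> h; lra. Qed.

Lemma hab_lem (t0 dl : R) : 0 <= t0 <= 1 -> 0 < dl -> Num.max 0 (t0 - dl) < Num.min 1 (t0 + dl).
Proof.
move=> /andP [h1 h2] hd; rewrite gt_max !lt_min.
apply/andP; split; apply/andP; split; lra.
Qed.

Lemma inI_lem (t0 dl t : R) : Num.max 0 (t0 - dl) <= t <= Num.min 1 (t0 + dl) ->
  0 <= t <= 1 /\ `|t - t0| <= dl.
Proof.
move=> /andP []; rewrite ge_max le_min => /andP [h1 h2] /andP [h3 h4].
split; first by rewrite h1 h3.
by rewrite ler_norml; apply/andP; split; lra.
Qed.

Lemma wlow_lem (Wt W0 L c0 : R) : `|Wt - W0| <= L -> 2 * c0 <= W0 -> L <= c0 -> c0 <= Wt.
Proof. rewrite ler_norml => /andP [h1 h2] h3 h4; lra. Qed.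

Lemma gaps_lem (rho s0 a b Wj Wk Rr c0 mn : R) : 0 <= rho -> 0 < s0 -> s0 <= 1 -> s0 * a <= b ->
  0 <= Rr -> 0 <= Wj -> mn * c0 <= a * Wj -> mn * c0 <= b * Wk -> mn * c0 <= a * Wk -> 0 <= mn * c0 ->
  [/\ rho * (2 * s0 * c0 * mn) <= rho * (b * Wj + a * Wk) + rho * s0 * (a * Wj + b * Wk + Rr) -
        rho * ((b - s0 * a) * Wj + (a + s0 * b) * Wk + s0 * Rr),
      rho * (2 * s0 * c0 * mn) <= rho * ((b - s0 * a) * Wj + (a + s0 * b) * Wk + s0 * Rr) -
        (rho * (b * Wj + a * Wk) - rho * s0 * (a * Wj + b * Wk + Rr)) &
      rho * (2 * s0 * c0 * mn) <= rho * ((b - s0 * a) * Wj + (a + s0 * b) * Wk + s0 * Rr) -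
        (rho * s0 * (a * Wj + b * Wk + Rr) - rho * (b * Wj + a * Wk))].
Proof.
move=> hr hs0 hs1 hsa hR hWj fa fb fa2 hmc.
have e1 : rho * (b * Wj + a * Wk) + rho * s0 * (a * Wj + b * Wk + Rr) -
        rho * ((b - s0 * a) * Wj + (a + s0 * b) * Wk + s0 * Rr) - rho * (2 * s0 * c0 * mn) =
        rho * (2 * s0 * (a * Wj - mn * c0)) by ring.
have p1 : 0 <= rho * (2 * s0 * (a * Wj - mn * c0)).
  by rewrite mulr_ge0 // mulr_ge0 ?subr_ge0 // mulr_ge0 // ltW.
have e2 : rho * ((b - s0 * a) * Wj + (a + s0 * b) * Wk + s0 * Rr) -
        (rho * (b * Wj + a * Wk) - rho * s0 * (a * Wj + b * Wk + Rr)) - rho * (2 * s0 * c0 * mn) =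
        rho * (2 * s0 * (b * Wk - mn * c0) + 2 * s0 * Rr) by ring.
have p2 : 0 <= rho * (2 * s0 * (b * Wk - mn * c0) + 2 * s0 * Rr).
  rewrite mulr_ge0 // addr_ge0 //; first by rewrite mulr_ge0 ?subr_ge0 // mulr_ge0 // ltW.
  by rewrite mulr_ge0 // mulr_ge0 // ltW.
have e3 : rho * ((b - s0 * a) * Wj + (a + s0 * b) * Wk + s0 * Rr) -
        (rho * s0 * (a * Wj + b * Wk + Rr) - rho * (b * Wj + a * Wk)) - rho * (2 * s0 * c0 * mn) =
        rho * (2 * ((b - s0 * a) * Wj) + 2 * (a * Wk - mn * c0) + 2 * ((1 - s0) * (mn * c0))) by ring.
have p3 : 0 <= rho * (2 * ((b - s0 * a) * Wj) + 2 * (a * Wk - mn * c0) + 2 * ((1 - s0) * (mn * c0))).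
  rewrite mulr_ge0 //; apply: addr_ge0; first apply: addr_ge0.
  - by rewrite mulr_ge0 // mulr_ge0 // subr_ge0.
  - by rewrite mulr_ge0 // subr_ge0.
  - by rewrite mulr_ge0 // mulr_ge0 // subr_ge0.
split; lra.
Qed.

Lemma errs_lem (rho Kp Kv Kq s0 ep M G r0 : R) : 0 <= rho -> rho <= r0 -> 0 <= 2 * Kq * M * Kv * s0 ->
  2 * (Kp + s0 * Kv + Kq) * ep <= G / 4 -> 2 * Kq * M * Kv * s0 * r0 <= G / 4 -> 0 < rho * G ->
  2 * (ep * (rho * Kp)) + 2 * (ep * (rho * s0 * Kv)) + 2 * (ep * (rho * Kq)) +
    rho * Kq * (2 * (M * (rho * s0 * Kv))) < rho * G.
Proof.
move=> hr hr0 hp h1 h2 hG.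
have hE1 : rho * (2 * (Kp + s0 * Kv + Kq) * ep) <= rho * (G / 4) by rewrite ler_wpM2l.
have hE2 : rho * (2 * Kq * M * Kv * s0 * rho) <= rho * (G / 4).
  rewrite ler_wpM2l //; apply: le_trans h2; exact: ler_wpM2l.
lra.
Qed.

End DichAux2.
Section Main.
Variables (R : realType) (n : nat) (w w' : R) (X : 'rV[R]_n -> Prop) (F : 'rV[R]_n -> itv R).
Hypotheses (hw : 0 <= w) (hw' : 0 <= w') (hww : w + w' = 1).
Variables (sg M : R).
Hypotheses (hsg : 0 < sg) (hM : 0 < M).
Hypothesis hSC : forall z1 z2 (l : R), X z1 -> X z2 -> 0 <= l <= 1 ->
  ilo (F (l *: z1 + (1 - l) *: z2)) <= l * ilo (F z1) + (1 - l) * ilo (F z2)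
       - sg / 2 * (l * (1 - l)) * enorm (z1 - z2) ^+ 2 /\
  ihi (F (l *: z1 + (1 - l) *: z2)) <= l * ihi (F z1) + (1 - l) * ihi (F z2)
       - sg / 2 * (l * (1 - l)) * enorm (z1 - z2) ^+ 2.
Hypothesis hLip : forall x y gx gy, X x -> X y -> is_grad F x gx -> is_grad F y gy ->
      inormn (igHn gx gy) <= M * enorm (x - y).
Hypothesis hX : convex_set X.
Variables (x y : 'rV[R]_n).
Hypotheses (hx : X x) (hy : X y).
Variable c : R -> 'I_n -> itv R.
Hypothesis hc : forall t, 0 <= t <= 1 -> GHP F (y + t *: (x - y)) (c t).

Let v := x - y.
Let z (t : R) := y + t *: v.
Let Kv := enorm v.
Let V := enorm v ^+ 2.
Let lo i t := ilo (c t i).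
Let hi i t := ihi (c t i).
Let Wd i t := hi i t - lo i t.
Let P t := \sum_(i < n) Num.min (v 0 i * lo i t) (v 0 i * hi i t).
Let Q t := \sum_(i < n) Num.max (v 0 i * lo i t) (v 0 i * hi i t).
Let Phi t := \sum_(i < n) v 0 i * (w * lo i t + w' * hi i t).
Let ell t := ilo (F (z t)).
Let u t := ihi (F (z t)).
Let hF (p : 'rV[R]_n) := ihi (F p) - ilo (F p).
Let Dn t t' := inormn (igHn (c t) (c t')).

Lemma z_comb t : z t = t *: x + (1 - t) *: y.
Proof. by apply/matrixP => a b; rewrite !mxE; ring. Qed.
Lemma z_in t : 0 <= t <= 1 -> X (z t).
Proof. by move=> ht; rewrite z_comb; apply: hX. Qed.
Lemma zdiff t t' : z t - z t' = (t - t') *: v.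
Proof. by apply/matrixP => a b; rewrite !mxE; ring. Qed.
Lemma zadd t s : z t + s *: v = z (t + s).
Proof. by apply/matrixP => a b; rewrite !mxE; ring. Qed.
Lemma z_lin t1 t2 (l : R) : l *: z t2 + (1 - l) *: z t1 = z (l * t2 + (1 - l) * t1).
Proof. by apply/matrixP => a b; rewrite !mxE; ring. Qed.
Lemma Kv_ge0 : 0 <= Kv. Proof. exact: enorm_ge0. Qed.
Lemma V_ge0 : 0 <= V. Proof. by rewrite /V sqr_ge0. Qed.

Lemma hcz t : 0 <= t <= 1 -> GHP F (z t) (c t).
Proof. exact: hc. Qed.

Lemma Lipc t t' : 0 <= t <= 1 -> 0 <= t' <= 1 -> Dn t t' <= M * (`|t - t'| * Kv).
Proof.
move=> ht ht'; rewrite /Dn.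
have := hLip (z_in ht) (z_in ht') (GHP_grad (hcz ht)) (GHP_grad (hcz ht')).
by rewrite zdiff enormZ.
Qed.

Lemma Dn_ge0 t t' : 0 <= Dn t t'.
Proof. by apply: sumr_ge0 => i _; apply: inorm_ge0. Qed.

Lemma Dn_i t t' i : inorm (igH (c t i) (c t' i)) <= Dn t t'.
Proof. by rewrite /Dn /inormn; apply: (sum_ge_one (f := fun i => inorm (igHn (c t) (c t') i))) => j; apply: inorm_ge0. Qed.

Lemma min_lip (a b a' b' : R) : `|Num.min a b - Num.min a' b'| <= Num.max `|a - a'| `|b - b'|.
Proof.
case: (leP a b) => h1; case: (leP a' b') => h2; rewrite le_max.
- by rewrite lexx.
- apply/orP; case: (leP 0 (a - b')) => h3.
    right; rewrite !ger0_norm; lra.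
  left; rewrite !ler0_norm; lra.
- apply/orP; case: (leP 0 (b - a')) => h3.
    left; rewrite !ger0_norm; lra.
  right; rewrite !ler0_norm; lra.
- by rewrite lexx orbT.
Qed.
Lemma max_lip (a b a' b' : R) : `|Num.max a b - Num.max a' b'| <= Num.max `|a - a'| `|b - b'|.
Proof.
case: (leP a b) => h1; case: (leP a' b') => h2; rewrite le_max.
- by rewrite lexx orbT.
- apply/orP; case: (leP 0 (b - a')) => h3.
    right; rewrite !ger0_norm; lra.
  left; rewrite !ler0_norm; lra.
- apply/orP; case: (leP 0 (a - b')) => h3.
    left; rewrite !ger0_norm; lra.
  right; rewrite !ler0_norm; lra.
- by rewrite lexx.
Qed.

Lemma lipP t t' : `|P t - P t'| <= Kv * Dn t t'.
Proof.
rewrite /P -sumrB; apply: (le_trans (ler_norm_sum _ _ _)).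
rewrite /Dn /inormn mulr_sumr; apply: ler_sum => i _.
apply: (le_trans (min_lip _ _ _ _)).
rewrite -!mulrBr !normrM -maxr_pMr // /igHn -inorm_igH.
by rewrite ler_wpM2r ?inorm_ge0 // abs_le_enorm.
Qed.
Lemma lipQ t t' : `|Q t - Q t'| <= Kv * Dn t t'.
Proof.
rewrite /Q -sumrB; apply: (le_trans (ler_norm_sum _ _ _)).
rewrite /Dn /inormn mulr_sumr; apply: ler_sum => i _.
apply: (le_trans (max_lip _ _ _ _)).
rewrite -!mulrBr !normrM -maxr_pMr // /igHn -inorm_igH.
by rewrite ler_wpM2r ?inorm_ge0 // abs_le_enorm.
Qed.
Lemma lipPhi t t' : `|Phi t - Phi t'| <= Kv * Dn t t'.
Proof.
rewrite /Phi -sumrB; apply: (le_trans (ler_norm_sum _ _ _)).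
rewrite /Dn /inormn mulr_sumr; apply: ler_sum => i _.
rewrite -mulrBr normrM; apply: ler_pM; rewrite ?normr_ge0 ?abs_le_enorm //.
rewrite /igHn; have h1 := dist_lo (c t i) (c t' i); have h2 := dist_hi (c t i) (c t' i).
rewrite /lo /hi.
set a := ilo (c t i) - ilo (c t' i) in h1 *; set b := ihi (c t i) - ihi (c t' i) in h2 *.
have -> : w * ilo (c t i) + w' * ihi (c t i) - (w * ilo (c t' i) + w' * ihi (c t' i)) = w * a + w' * b.
  by rewrite /a /b; ring.
apply: (le_trans (ler_normD _ _)); rewrite !normrM (ger0_norm hw) (ger0_norm hw').
have : w * `|a| <= w * inorm (igH (c t i) (c t' i)) by rewrite ler_wpM2l.
have : w' * `|b| <= w' * inorm (igH (c t i) (c t' i)) by rewrite ler_wpM2l.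
move=> h3 h4; have e : inorm (igH (c t i) (c t' i)) = (w + w') * inorm (igH (c t i) (c t' i)) by rewrite hww mul1r.
rewrite [X in _ <= X]e; lra.
Qed.
Lemma lipW i t t' : `|Wd i t - Wd i t'| <= 2 * Dn t t'.
Proof.
apply: (le_trans (width_dist (c t i) (c t' i))); rewrite ler_pM2l //; exact: Dn_i.
Qed.

Lemma along t e : 0 <= t <= 1 -> 0 < e -> exists2 eta : R, 0 < eta & forall s, `|s| * Kv < eta ->
  `|Num.min (ell (t + s) - ell t) (u (t + s) - u t) - ilo (linIVF (c t) (s *: v))| <= e * (`|s| * Kv) /\
  `|Num.max (ell (t + s) - ell t) (u (t + s) - u t) - ihi (linIVF (c t) (s *: v))| <= e * (`|s| * Kv).
Proof.
move=> ht he; have [eta heta H] := hcz ht he.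
exists eta => // s hs.
have := H (s *: v); rewrite enormZ => /(_ hs); rewrite zadd => hb.
split; apply: (le_trans _ hb); [exact: (dist_lo (igH (F (z (t + s))) (F (z t))) (linIVF (c t) (s *: v))) | exact: (dist_hi (igH (F (z (t + s))) (F (z t))) (linIVF (c t) (s *: v)))].
Qed.

Lemma segconv t1 t2 (l : R) : 0 <= t1 <= 1 -> 0 <= t2 <= 1 -> 0 <= l <= 1 ->
  ell (l * t2 + (1 - l) * t1) <= l * ell t2 + (1 - l) * ell t1 - sg / 2 * (l * (1 - l)) * ((t2 - t1) ^+ 2 * V) /\
  u (l * t2 + (1 - l) * t1) <= l * u t2 + (1 - l) * u t1 - sg / 2 * (l * (1 - l)) * ((t2 - t1) ^+ 2 * V).
Proof.
move=> h1 h2 hl; have := hSC (z_in h2) (z_in h1) hl.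
by rewrite z_lin zdiff enormZ exprMn real_normK ?num_real.
Qed.

Lemma base_ineq (D s a m L e K k : R) : 0 < s -> 0 < D ->
  s * a <= m + e * s * K -> D * m <= s * L - s * k -> D * a <= L - k + e * D * K.
Proof.
move=> hs hD h1 h2.
have h3 : D * (s * a) <= D * (m + e * s * K) by rewrite ler_wpM2l // ltW.
rewrite -(ler_pM2l hs); lra.
Qed.

Lemma frac_le (a ep : R) : 0 <= a -> 0 < ep -> a * (ep / (a + 1)) <= ep.
Proof.
move=> ha hep; rewrite mulrA ler_pdivrMr; last by lra.
lra.
Qed.

Lemma conv_step_right t1 t2 s : 0 <= t1 -> t1 < t2 -> t2 <= 1 -> 0 < s -> s <= t2 - t1 ->
  (t2 - t1) * (ell (t1 + s) - ell t1) <= s * (ell t2 - ell t1) - s * (sg / 2 * (t2 - t1 - s) * (t2 - t1) * V) /\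
  (t2 - t1) * (u (t1 + s) - u t1) <= s * (u t2 - u t1) - s * (sg / 2 * (t2 - t1 - s) * (t2 - t1) * V).
Proof.
move=> h1 h12 h2 hs hsD.
set D := t2 - t1.
have hD : 0 < D by rewrite /D subr_gt0.
have hDn : D != 0 by rewrite gt_eqF.
have hl : 0 <= s / D <= 1.
  rewrite divr_ge0 ?(ltW hs) ?(ltW hD) //= ler_pdivrMr // mul1r //.
have ht1 : 0 <= t1 <= 1 by rewrite h1 /=; lra.
have ht2 : 0 <= t2 <= 1 by rewrite h2 andbT; lra.
have e1 : t1 + s = s / D * t2 + (1 - s / D) * t1 by rewrite /D; field; rewrite -/D.
have [c1 c2] := segconv ht1 ht2 hl.
rewrite -e1 in c1 c2.
have e2 : forall f : R -> R, D * (s / D * f t2 + (1 - s / D) * f t1 -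
          sg / 2 * (s / D * (1 - s / D)) * ((t2 - t1) ^+ 2 * V) - f t1) =
          s * (f t2 - f t1) - s * (sg / 2 * (t2 - t1 - s) * (t2 - t1) * V).
  by move=> f; rewrite /D; field; rewrite -/D.
split.
  rewrite -(e2 ell) ler_wpM2l ?(ltW hD) //; lra.
rewrite -(e2 u) ler_wpM2l ?(ltW hD) //; lra.
Qed.

Lemma L_lo_pos t s : 0 <= s -> ilo (linIVF (c t) (s *: v)) = s * P t.
Proof. exact: ilo_linIVF_pos. Qed.
Lemma L_hi_pos t s : 0 <= s -> ihi (linIVF (c t) (s *: v)) = s * Q t.
Proof. exact: ihi_linIVF_pos. Qed.
Lemma L_lo_neg t s : s <= 0 -> ilo (linIVF (c t) (s *: v)) = s * Q t.
Proof. exact: ilo_linIVF_neg. Qed.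
Lemma L_hi_neg t s : s <= 0 -> ihi (linIVF (c t) (s *: v)) = s * P t.
Proof. exact: ihi_linIVF_neg. Qed.

Lemma conv_step_left t1 t2 s : 0 <= t1 -> t1 < t2 -> t2 <= 1 -> 0 < s -> s <= t2 - t1 ->
  (t2 - t1) * (ell (t2 - s) - ell t2) <= s * (ell t1 - ell t2) - s * (sg / 2 * (t2 - t1 - s) * (t2 - t1) * V) /\
  (t2 - t1) * (u (t2 - s) - u t2) <= s * (u t1 - u t2) - s * (sg / 2 * (t2 - t1 - s) * (t2 - t1) * V).
Proof.
move=> h1 h12 h2 hs hsD.
set D := t2 - t1.
have hD : 0 < D by rewrite /D subr_gt0.
have hDn : D != 0 by rewrite gt_eqF.
have hl : 0 <= s / D <= 1.
  rewrite divr_ge0 ?(ltW hs) ?(ltW hD) //= ler_pdivrMr // mul1r //.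
have ht1 : 0 <= t1 <= 1 by rewrite h1 /=; lra.
have ht2 : 0 <= t2 <= 1 by rewrite h2 andbT; lra.
have e1 : t2 - s = s / D * t1 + (1 - s / D) * t2 by rewrite /D; field; rewrite -/D.
have [c1 c2] := segconv ht2 ht1 hl.
rewrite -e1 in c1 c2.
have e2 : forall f : R -> R, D * (s / D * f t1 + (1 - s / D) * f t2 -
          sg / 2 * (s / D * (1 - s / D)) * ((t1 - t2) ^+ 2 * V) - f t2) =
          s * (f t1 - f t2) - s * (sg / 2 * (t2 - t1 - s) * (t2 - t1) * V).
  by move=> f; rewrite /D; field; rewrite -/D.
split.
  rewrite -(e2 ell) ler_wpM2l ?(ltW hD) //; lra.
rewrite -(e2 u) ler_wpM2l ?(ltW hD) //; lra.
Qed.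

Lemma small_step (D ep eta a : R) : 0 < D -> 0 < ep -> 0 < eta -> 0 <= a ->
  exists s : R, [/\ 0 < s, s <= D, s * Kv < eta & a * s <= ep].
Proof.
move=> hD hep heta ha.
have hK := Kv_ge0.
exists (Num.min D (Num.min (eta / (2 * (Kv + 1))) (ep / (a + 1)))).
have h1 : 0 < eta / (2 * (Kv + 1)) by apply: divr_gt0 => //; lra.
have h2 : 0 < ep / (a + 1) by apply: divr_gt0 => //; lra.
split.
- by rewrite !lt_min hD h1 h2.
- by rewrite ge_min lexx.
- apply: (le_lt_trans (y := eta / (2 * (Kv + 1)) * Kv)).
    by rewrite ler_wpM2r // !ge_min lexx orbT.
  rewrite mulrAC ltr_pdivrMr; last by lra.
  rewrite ltr_pM2l //; lra.
- apply: (le_trans (y := a * (ep / (a + 1)))); last exact: frac_le.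
  by rewrite ler_wpM2l // !ge_min lexx !orbT.
Qed.

Lemma upperPQ t1 t2 : 0 <= t1 -> t1 < t2 -> t2 <= 1 ->
  (t2 - t1) * P t1 <= Num.min (ell t2 - ell t1) (u t2 - u t1) - sg / 2 * (t2 - t1) ^+ 2 * V /\
  (t2 - t1) * Q t1 <= Num.max (ell t2 - ell t1) (u t2 - u t1) - sg / 2 * (t2 - t1) ^+ 2 * V.
Proof.
move=> h1 h12 h2.
set D := t2 - t1; set L := ell t2 - ell t1; set U := u t2 - u t1.
have hD : 0 < D by rewrite /D subr_gt0.
have hK := Kv_ge0; have hV := V_ge0.
suff H : forall ep, 0 < ep ->
   D * P t1 <= Num.min L U - sg / 2 * D ^+ 2 * V + ep /\
   D * Q t1 <= Num.max L U - sg / 2 * D ^+ 2 * V + ep.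
  by split; apply/ler_addgt0Pr => ep hep; have [] := H ep hep.
move=> ep hep.
set e := ep / 2 / (D * Kv + 1).
have hDK : 0 <= D * Kv by rewrite mulr_ge0 // ltW.
have he : 0 < e by rewrite /e divr_gt0 //; lra.
have he2 : D * Kv * e <= ep / 2 by apply: frac_le => //; lra.
have ht1 : 0 <= t1 <= 1 by rewrite h1 /=; lra.
have [eta heta Ha] := along ht1 he.
have hsDV : 0 <= sg * D * V by rewrite !mulr_ge0 // ltW.
have [s [hs hsD hsK hsa]] := small_step hD hep heta hsDV.
have hsK' : `|s| * Kv < eta by rewrite (gtr0_norm hs).
have [A1 A2] := Ha s hsK'.
rewrite (gtr0_norm hs) (L_lo_pos _ (ltW hs)) in A1.
rewrite (gtr0_norm hs) (L_hi_pos _ (ltW hs)) in A2.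
have A1' : s * P t1 <= Num.min (ell (t1 + s) - ell t1) (u (t1 + s) - u t1) + e * s * Kv.
  move: A1; rewrite ler_norml => /andP [h _]; lra.
have A2' : s * Q t1 <= Num.max (ell (t1 + s) - ell t1) (u (t1 + s) - u t1) + e * s * Kv.
  move: A2; rewrite ler_norml => /andP [h _]; lra.
have [c1 c2] := conv_step_right h1 h12 h2 hs hsD.
rewrite -/D in c1 c2.
set k := sg / 2 * (D - s) * D * V in c1 c2.
have m2 : Num.min (ell (t1 + s) - ell t1) (u (t1 + s) - u t1) <= u (t1 + s) - u t1 by rewrite ge_min lexx orbT.
have m1' : Num.min (ell (t1 + s) - ell t1) (u (t1 + s) - u t1) <= ell (t1 + s) - ell t1 by rewrite ge_min lexx.
have b1 := base_ineq hs hD (le_trans A1' (lerD m1' (lexx _))) c1.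
have b2 := base_ineq hs hD (le_trans A1' (lerD m2 (lexx _))) c2.
have ek : k = sg / 2 * D ^+ 2 * V - (sg * D * V * s) / 2 by rewrite /k; ring.
have eL : L = ell t2 - ell t1 by [].
have eU : U = u t2 - u t1 by [].
split.
  case: (leP L U) => hLU.
    lra.
  lra.
case: (leP (ell (t1 + s) - ell t1) (u (t1 + s) - u t1)) => hm.
  rewrite (max_idPr hm) in A2'.
  have b3 := base_ineq hs hD A2' c2.
  case: (leP L U) => hLU; lra.
rewrite (max_idPl (ltW hm)) in A2'.
have b3 := base_ineq hs hD A2' c1.
case: (leP L U) => hLU; lra.
Qed.

Lemma lowerPQ t1 t2 : 0 <= t1 -> t1 < t2 -> t2 <= 1 ->
  Num.min (ell t2 - ell t1) (u t2 - u t1) + sg / 2 * (t2 - t1) ^+ 2 * V <= (t2 - t1) * P t2 /\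
  Num.max (ell t2 - ell t1) (u t2 - u t1) + sg / 2 * (t2 - t1) ^+ 2 * V <= (t2 - t1) * Q t2.
Proof.
move=> h1 h12 h2.
set D := t2 - t1; set L := ell t2 - ell t1; set U := u t2 - u t1.
have hD : 0 < D by rewrite /D subr_gt0.
have hK := Kv_ge0; have hV := V_ge0.
suff H : forall ep, 0 < ep ->
   Num.min L U + sg / 2 * D ^+ 2 * V <= D * P t2 + ep /\
   Num.max L U + sg / 2 * D ^+ 2 * V <= D * Q t2 + ep.
  by split; apply/ler_addgt0Pr => ep hep; have [] := H ep hep.
move=> ep hep.
set e := ep / 2 / (D * Kv + 1).
have hDK : 0 <= D * Kv by rewrite mulr_ge0 // ltW.
have he : 0 < e by rewrite /e divr_gt0 //; lra.
have he2 : D * Kv * e <= ep / 2 by apply: frac_le => //; lra.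
have ht2 : 0 <= t2 <= 1 by rewrite h2 andbT; lra.
have [eta heta Ha] := along ht2 he.
have hsDV : 0 <= sg * D * V by rewrite !mulr_ge0 // ltW.
have [s [hs hsD hsK hsa]] := small_step hD hep heta hsDV.
have hsK' : `|- s| * Kv < eta by rewrite normrN (gtr0_norm hs).
have hns : - s <= 0 by rewrite oppr_le0 ltW.
have [A1 A2] := Ha (- s) hsK'.
rewrite normrN (gtr0_norm hs) (L_lo_neg _ hns) in A1.
rewrite normrN (gtr0_norm hs) (L_hi_neg _ hns) in A2.
have A1' : s * (- Q t2) <= Num.min (ell (t2 - s) - ell t2) (u (t2 - s) - u t2) + e * s * Kv.
  move: A1; rewrite ler_norml => /andP [h _]; lra.
have A2' : s * (- P t2) <= Num.max (ell (t2 - s) - ell t2) (u (t2 - s) - u t2) + e * s * Kv.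
  move: A2; rewrite ler_norml => /andP [h _]; lra.
have [c1 c2] := conv_step_left h1 h12 h2 hs hsD.
rewrite -/D in c1 c2.
set k := sg / 2 * (D - s) * D * V in c1 c2.
have m2 : Num.min (ell (t2 - s) - ell t2) (u (t2 - s) - u t2) <= u (t2 - s) - u t2 by rewrite ge_min lexx orbT.
have m1 : Num.min (ell (t2 - s) - ell t2) (u (t2 - s) - u t2) <= ell (t2 - s) - ell t2 by rewrite ge_min lexx.
have ek : k = sg / 2 * D ^+ 2 * V - (sg * D * V * s) / 2 by rewrite /k; ring.
have eL : L = ell t2 - ell t1 by [].
have eU : U = u t2 - u t1 by [].
split.
  case: (leP (ell (t2 - s) - ell t2) (u (t2 - s) - u t2)) => hm.
    rewrite (max_idPr hm) in A2'.
    have b3 := base_ineq hs hD A2' c2.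
    case: (leP L U) => hLU; lra.
  rewrite (max_idPl (ltW hm)) in A2'.
  have b3 := base_ineq hs hD A2' c1.
  case: (leP L U) => hLU; lra.
have b1 := base_ineq hs hD (le_trans A1' (lerD m1 (lexx _))) c1.
have b2 := base_ineq hs hD (le_trans A1' (lerD m2 (lexx _))) c2.
case: (leP L U) => hLU; lra.
Qed.

Lemma monoPQ t1 t2 : 0 <= t1 -> t1 <= t2 -> t2 <= 1 ->
  P t1 + sg * V * (t2 - t1) <= P t2 /\ Q t1 + sg * V * (t2 - t1) <= Q t2.
Proof.
move=> h1 h12 h2.
case: (eqVneq t1 t2) => [->|hne].
  by rewrite subrr !mulr0 !addr0.
have h12' : t1 < t2 by rewrite lt_neqAle hne h12.
have hD : 0 < t2 - t1 by rewrite subr_gt0.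
have [u1 u2] := upperPQ h1 h12' h2.
have [l1 l2] := lowerPQ h1 h12' h2.
split.
  rewrite -(ler_pM2l hD).
  have -> : (t2 - t1) * (P t1 + sg * V * (t2 - t1)) = (t2 - t1) * P t1 + sg * (t2 - t1) ^+ 2 * V by ring.
  lra.
rewrite -(ler_pM2l hD).
have -> : (t2 - t1) * (Q t1 + sg * V * (t2 - t1)) = (t2 - t1) * Q t1 + sg * (t2 - t1) ^+ 2 * V by ring.
lra.
Qed.

Lemma Wd_ge0 i t : 0 <= Wd i t.
Proof. by rewrite /Wd /hi /lo subr_ge0 ilohi. Qed.

Lemma wrel_gen (t : R) (d : 'rV[R]_n) (ep : R) :
  inorm (igH (igH (F (z t + d)) (F (z t))) (linIVF (c t) d)) <= ep ->
  `| `|hF (z t + d) - hF (z t)| - \sum_(i < n) `|d 0 i| * Wd i t| <= 2 * ep.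
Proof.
move=> h; have := width_rel (F (z t + d)) (F (z t)) (linIVF (c t) d).
rewrite width_linIVF => h2; apply: (le_trans h2); rewrite ler_pM2l //.
Qed.

Lemma sumW_diff (d : 'rV[R]_n) (t t' : R) : 0 <= t <= 1 -> 0 <= t' <= 1 ->
  `|\sum_(i < n) `|d 0 i| * Wd i t' - \sum_(i < n) `|d 0 i| * Wd i t| <=
  enorm d * (2 * (M * (`|t' - t| * Kv))).
Proof.
move=> ht ht'; rewrite -sumrB; apply: (le_trans (ler_norm_sum _ _ _)).
apply: (le_trans (y := \sum_(i < n) enorm d * (2 * inorm (igH (c t' i) (c t i))))).
  apply: ler_sum => i _; rewrite -mulrBr normrM normr_id; apply: ler_pM; rewrite ?normr_ge0 ?abs_le_enorm //.
  exact: width_dist.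
rewrite -mulr_sumr ler_wpM2l ?enorm_ge0 // -mulr_sumr ler_pM2l //.
exact: (Lipc ht' ht).
Qed.

Lemma dich_contra t0 j k : 0 <= t0 <= 1 -> 0 < v 0 j * Wd j t0 -> v 0 k * Wd k t0 < 0 -> False.
Proof.
move=> ht0 hj hk.
have hWj0 := Wd_ge0 j t0; have hWk0 := Wd_ge0 k t0.
have ha : 0 < v 0 j by case: (leP (v 0 j) 0) => // h; have := mulr_le0_ge0 h hWj0; lra.
have hb' : v 0 k < 0 by case: (leP 0 (v 0 k)) => // h; have := mulr_ge0 h hWk0; lra.
have hWj : 0 < Wd j t0 by case: (leP (Wd j t0) 0) => // h; have := mulr_ge0_le0 (ltW ha) h; lra.
have hWk : 0 < Wd k t0 by case: (leP (Wd k t0) 0) => // h; have := mulr_le0 (ltW hb') h; lra.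
have hjk : j != k by apply/eqP => e; rewrite e in hj; lra.
have hK := Kv_ge0.
pose a := v 0 j; pose b := - v 0 k.
have hb : 0 < b by rewrite /b oppr_gt0.
pose c0 := Num.min (Wd j t0) (Wd k t0) / 2.
have hc0 : 0 < c0 by rewrite /c0 divr_gt0 // lt_min hWj hWk.
have c0j : 2 * c0 <= Wd j t0 by rewrite /c0 mulrC divfK ?ge_min ?lexx // pnatr_eq0.
have c0k : 2 * c0 <= Wd k t0 by rewrite /c0 mulrC divfK ?ge_min ?lexx ?orbT // pnatr_eq0.
pose dl := c0 / (2 * M * Kv + 1).
have hMK : 0 <= 2 * M * Kv by rewrite mulr_ge0 // mulr_ge0 // ltW.
have hdl : 0 < dl by rewrite /dl divr_gt0 // pos_add1.
have hKd : 2 * M * Kv * dl <= c0 by apply: frac_le => //; exact: ltW.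
have Wlow : forall t, 0 <= t <= 1 -> `|t - t0| <= dl -> c0 <= Wd j t /\ c0 <= Wd k t.
  move=> t ht hd.
  have hL := Lipc ht ht0.
  have h1 : 2 * Dn t t0 <= 2 * M * Kv * dl.
    have h0 : Dn t t0 <= M * (dl * Kv) := le_trans hL (ler_wpM2l (ltW hM) (ler_wpM2r hK hd)).
    have -> : 2 * M * Kv * dl = 2 * (M * (dl * Kv)) by ring.
    by rewrite ler_pM2l.
  split; [exact: (wlow_lem (lipW j t t0) c0j (le_trans h1 hKd)) |
          exact: (wlow_lem (lipW k t t0) c0k (le_trans h1 hKd))].
pose al := Num.max 0 (t0 - dl); pose be := Num.min 1 (t0 + dl).
have hab : al < be := hab_lem ht0 hdl.
have inI : forall t, al <= t <= be -> 0 <= t <= 1 /\ `|t - t0| <= dl := fun t => @inI_lem R t0 dl t.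
pose s0 := Num.min 1 (b / a).
have hs0 : 0 < s0 by rewrite /s0 lt_min ltr01 divr_gt0.
have hs01 : s0 <= 1 by rewrite /s0 ge_min lexx.
have hs0a : s0 * a <= b.
  have : s0 <= b / a by rewrite /s0 ge_min lexx orbT.
  by rewrite ler_pdivlMr.
pose p : 'rV[R]_n := \row_(i < n) (if i == j then b else if i == k then a else 0).
pose q := p - s0 *: v.
pose Kp := enorm p; pose Kq := enorm q.
have hKp : 0 <= Kp := enorm_ge0 p.
have hKq : 0 <= Kq := enorm_ge0 q.
pose G := 2 * s0 * c0 * Num.min a b.
have hmin : 0 < Num.min a b by rewrite lt_min ha hb.
have hG : 0 < G.
  rewrite /G; apply: mulr_gt0 => //; apply: mulr_gt0 => //; apply: mulr_gt0 => //.
have hKv0 : 0 <= s0 * Kv by rewrite mulr_ge0 // ltW.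
have hS : 0 <= Kp + s0 * Kv + Kq by rewrite !addr_ge0.
have hG4 : 0 < G / 4 by rewrite divr_gt0.
pose ep := G / 4 / (2 * (Kp + s0 * Kv + Kq) + 1).
have hS2 : 0 <= 2 * (Kp + s0 * Kv + Kq) by rewrite mulr_ge0.
have hep : 0 < ep by rewrite /ep divr_gt0 // pos_add1.
have hepS : 2 * (Kp + s0 * Kv + Kq) * ep <= G / 4 by apply: frac_le => //; exact: ltW.
pose r0 := G / 4 / (2 * Kq * M * Kv * s0 + 1).
have hprod : 0 <= 2 * Kq * M * Kv * s0.
  apply: mulr_ge0; last exact: ltW.
  apply: mulr_ge0 => //; apply: mulr_ge0; last exact: ltW.
  by apply: mulr_ge0.
have hr0 : 0 < r0 by rewrite /r0 divr_gt0 // pos_add1.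
have hr0S : 2 * Kq * M * Kv * s0 * r0 <= G / 4 by apply: frac_le => //; exact: ltW.
pose T (m : nat) (t : R) := al <= t <= be /\ forall d, enorm d < (m.+1%:R)^-1 ->
   inorm (igH (igH (F (z t + d)) (F (z t))) (linIVF (c t) d)) <= ep * enorm d.
have cover : forall t, al <= t <= be -> exists m, T m t.
  move=> t ht; have [ht1 _] := inI t ht.
  have [eta heta H] := hcz ht1 hep.
  have hb0 : 0 <= eta^-1 by rewrite invr_ge0 ltW.
  have hm := archi_boundP hb0.
  set m := Num.Def.archi_bound _ in hm.
  exists m; split => // d hd; apply: H; apply: (lt_trans hd).
  have hm1 : eta^-1 < m.+1%:R by apply: (lt_le_trans hm); rewrite ler_nat.
  rewrite -(ltr_pM2l heta) mulfV ?gt_eqF // in hm1.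
  rewrite -div1r ltr_pdivrMr ?ltr0Sn //.
pose r (m : nat) := s0 * Num.min r0 ((m.+1%:R)^-1 / (Kp + s0 * Kv + Kq + 1)).
have hr : forall m, 0 < r m.
  move=> m; rewrite /r mulr_gt0 // lt_min hr0 /= divr_gt0 ?pos_add1 //.
  by rewrite invr_gt0 ltr0Sn.
have [m [t [t' [[hT hT' hat htt' htr] hbe]]]] := close_pair hab hr cover.
have [hTt HT] := hT; have [hTt' HT'] := hT'.
have [ht hdt] := inI t hTt; have [ht' hdt'] := inI t' hTt'.
pose rho := (t' - t) / s0.
have hrho : 0 < rho by rewrite /rho divr_gt0 // subr_gt0.
have erho : t' - t = rho * s0 by rewrite /rho divfK // gt_eqF.
have hrho2 : rho < Num.min r0 ((m.+1%:R)^-1 / (Kp + s0 * Kv + Kq + 1)).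
  by rewrite /rho ltr_pdivrMr // mulrC; apply: lt_sub; exact: htr.
have hrho_r0 : rho <= r0 by move: hrho2; rewrite lt_min => /andP [h _]; exact: ltW.
have hrho0 : 0 <= rho := ltW hrho.
have hrhoS : rho * (Kp + s0 * Kv + Kq) < (m.+1%:R)^-1.
  move: hrho2; rewrite lt_min => /andP [_ h].
  move: h; rewrite ltr_pdivlMr ?pos_add1 // => h.
  exact: lt_drop1.
have [Wj Wk] := Wlow t ht hdt.
clearbody rho.
have hkj : k != j by rewrite eq_sym.
have pj : p 0 j = b by rewrite /p mxE eqxx.
have pk : p 0 k = a by rewrite /p mxE (negbTE hkj) eqxx.
have pr : forall i, (i != j) && (i != k) -> p 0 i = 0.
  by move=> i /andP [h1 h2]; rewrite /p mxE (negbTE h1) (negbTE h2).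
pose Rr := \sum_(i < n | (i != j) && (i != k)) `|v 0 i| * Wd i t.
have hRr : 0 <= Rr by apply: sumr_ge0 => i _; rewrite mulr_ge0 ?Wd_ge0.
have hdt0 : 0 <= t' - t by rewrite subr_ge0 ltW.
pose d1 := rho *: p; pose d2 := (t' - t) *: v; pose d3 := rho *: q.
have sc : forall (kk : R) (uu : 'rV[R]_n) i, (kk *: uu) 0 i = kk * uu 0 i by move=> *; rewrite mxE.
have sb : forall (u1 u2 : 'rV[R]_n) i, (u1 - u2) 0 i = u1 0 i - u2 0 i by move=> *; rewrite !mxE.
have s1 : \sum_(i < n) `|d1 0 i| * Wd i t = rho * (b * Wd j t + a * Wd k t).
  rewrite (split3 _ hjk) big1 ?addr0.
    rewrite /d1 !sc pj pk !normrM (ger0_norm hrho0) (gtr0_norm hb) (gtr0_norm ha); rewrite /a /b; ring.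
  move=> i hi0; rewrite /d1 sc (pr i hi0) mulr0 normr0 mul0r //.
have s2 : \sum_(i < n) `|d2 0 i| * Wd i t = (t' - t) * (a * Wd j t + b * Wd k t + Rr).
  rewrite (split3 _ hjk) /d2 !sc !normrM (ger0_norm hdt0) (gtr0_norm ha).
  have -> : `|v 0 k| = b by rewrite ltr0_norm.
  have -> : \sum_(i < n | (i != j) && (i != k)) `|((t' - t) *: v) 0 i| * Wd i t = (t' - t) * Rr.
    by rewrite /Rr mulr_sumr; apply: eq_bigr => i _; rewrite sc normrM (ger0_norm hdt0) mulrA.
  rewrite /a /b; ring.
have s3 : \sum_(i < n) `|d3 0 i| * Wd i t = rho * ((b - s0 * a) * Wd j t + (a + s0 * b) * Wd k t + s0 * Rr).
  have hq1 : 0 <= b - s0 * a by rewrite subr_ge0.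
  have hq2 : 0 <= a + s0 * b by rewrite addr_ge0 ?mulr_ge0 // ltW.
  rewrite (split3 _ hjk) /d3 /q !sc !sb !sc pj pk !normrM (ger0_norm hrho0).
  have -> : b - s0 * v 0 j = b - s0 * a by [].
  have -> : a - s0 * v 0 k = a + s0 * b by rewrite /b; ring.
  rewrite (ger0_norm hq1) (ger0_norm hq2).
  have -> : \sum_(i < n | (i != j) && (i != k)) `|(rho *: (p - s0 *: v)) 0 i| * Wd i t = rho * (s0 * Rr).
    rewrite /Rr !mulr_sumr; apply: eq_bigr => i hi0; rewrite sc sb sc (pr i hi0) sub0r normrM normrN normrM.
    by rewrite (ger0_norm hrho0) (gtr0_norm hs0); ring.
  rewrite /a /b; ring.
set iv := (m.+1%:R)^-1 in HT HT' hrhoS.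
have n1 : enorm d1 = rho * Kp by rewrite /d1 enormZ (ger0_norm hrho0).
have n2 : enorm d2 = rho * (s0 * Kv) by rewrite /d2 enormZ (ger0_norm hdt0) erho mulrA.
have n3 : enorm d3 = rho * Kq by rewrite /d3 enormZ (ger0_norm hrho0).
have [hd1 hd2 hd3] := lt3 hrho0 hKp hKv0 hKq hrhoS.
rewrite -n1 in hd1; rewrite -n2 in hd2; rewrite -n3 in hd3.
have w1 := wrel_gen (HT d1 hd1).
have w2 := wrel_gen (HT d2 hd2).
have w3 := wrel_gen (HT' d3 hd3).
have sd := sumW_diff d3 ht ht'.
have ez2 : z t + d2 = z t' by rewrite /d2 zadd; congr z; rewrite addrC subrK.
have et' : t' = t + rho * s0 by rewrite -erho addrC subrK.
have ezz : z t' + d3 = z t + d1.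
  by rewrite /d3 /d1 /q; apply/matrixP => i1 i2; rewrite !mxE et'; ring.
rewrite s1 n1 in w1.
rewrite s2 n2 ez2 erho mulrA in w2.
rewrite n3 in w3.
rewrite s3 n3 (ger0_norm hdt0) erho in sd.
rewrite ezz in w3.
have e3 : hF (z t + d1) - hF (z t') = (hF (z t + d1) - hF (z t)) - (hF (z t') - hF (z t)) by ring.
rewrite e3 in w3.
have mab : Num.min a b <= a by rewrite ge_min lexx.
have mab' : Num.min a b <= b by rewrite ge_min lexx orbT.
have hm0 : 0 <= Num.min a b := ltW hmin.
have fa : Num.min a b * c0 <= a * Wd j t by apply: ler_pM => //; exact: ltW.
have fb : Num.min a b * c0 <= b * Wd k t by apply: ler_pM => //; exact: ltW.
have fa2 : Num.min a b * c0 <= a * Wd k t by apply: ler_pM => //; exact: ltW.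
have hmc : 0 <= Num.min a b * c0 by rewrite mulr_ge0 // ltW.
have [g1 g2 g3] := gaps_lem hrho0 hs0 hs01 hs0a hRr (Wd_ge0 j t) fa fb fa2 hmc.
have hrG : 0 < rho * G := mulr_gt0 hrho hG.
have hE := errs_lem hrho0 hrho_r0 hprod hepS hr0S hrG.
rewrite -mulrA in hE.
rewrite -[2 * ep * _]mulrA in w2.
rewrite -[rho * s0 * Kv]mulrA in sd.
exact: (dich_alg w1 w2 w3 sd g1 g2 g3 hE).
Qed.

Lemma dich t0 : 0 <= t0 <= 1 ->
  (forall i, 0 <= v 0 i * Wd i t0) \/ (forall i, v 0 i * Wd i t0 <= 0).
Proof.
move=> ht0.
case: (pselect (forall i, 0 <= v 0 i * Wd i t0)) => [h|h]; first by left.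
right => i; case: (leP (v 0 i * Wd i t0) 0) => // hi0.
exfalso; move/existsNP: h => [j hj].
apply: (dich_contra (k := j) ht0 hi0).
rewrite ltNge; exact/negP.
Qed.

Lemma PhiAB t : 0 <= t <= 1 -> Phi t = w * P t + w' * Q t \/ Phi t = w' * P t + w * Q t.
Proof.
move=> ht; have ePhi : Phi t = w * \sum_(i < n) v 0 i * lo i t + w' * \sum_(i < n) v 0 i * hi i t.
  by rewrite /Phi !mulr_sumr -big_split /=; apply: eq_bigr => i _; ring.
have eW : forall i, v 0 i * hi i t - v 0 i * lo i t = v 0 i * Wd i t by move=> i; rewrite /Wd mulrBr.
case: (dich ht) => hd; [left | right].
  have eP : P t = \sum_(i < n) v 0 i * lo i t.
    apply: eq_bigr => i _; apply/min_idPl; rewrite -subr_ge0 eW; exact: hd.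
  have eQ : Q t = \sum_(i < n) v 0 i * hi i t.
    apply: eq_bigr => i _; apply/max_idPr; rewrite -subr_ge0 eW; exact: hd.
  by rewrite ePhi eP eQ.
have eP : P t = \sum_(i < n) v 0 i * hi i t.
  apply: eq_bigr => i _; apply/min_idPr; rewrite -subr_ge0 -opprB eW oppr_ge0; exact: hd.
have eQ : Q t = \sum_(i < n) v 0 i * lo i t.
  apply: eq_bigr => i _; apply/max_idPl; rewrite -subr_ge0 -opprB eW oppr_ge0; exact: hd.
by rewrite ePhi eP eQ addrC.
Qed.

Lemma final_mono : Phi 0 + sg * V <= Phi 1.
Proof.
have hK := Kv_ge0.
have hKK : 0 <= 2 * Kv * M * Kv by rewrite !mulr_ge0 // ltW.
have lipAB : forall (ww ww' : R), 0 <= ww -> 0 <= ww' -> ww + ww' = 1 ->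
  forall t t', 0 <= t <= 1 -> 0 <= t' <= 1 ->
  `|(Phi t - (ww * P t + ww' * Q t)) - (Phi t' - (ww * P t' + ww' * Q t'))| <= 2 * Kv * M * Kv * `|t - t'|.
  move=> ww ww' h1 h2 h3 t t' ht ht'.
  have hD := Lipc ht ht'.
  have l1 := lipPhi t t'; have l2 := lipP t t'; have l3 := lipQ t t'.
  have e : (Phi t - (ww * P t + ww' * Q t)) - (Phi t' - (ww * P t' + ww' * Q t')) =
     (Phi t - Phi t') - ww * (P t - P t') - ww' * (Q t - Q t') by ring.
  rewrite e; apply: (le_trans (ler_normB _ _)); apply: (le_trans (lerD (ler_normB _ _) (lexx _))).
  rewrite !normrM (ger0_norm h1) (ger0_norm h2).
  have l2' := ler_wpM2l h1 l2; have l3' := ler_wpM2l h2 l3.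
  have hKD : Kv * Dn t t' <= Kv * (M * (`|t - t'| * Kv)) by rewrite ler_wpM2l.
  have e2 : ww * (Kv * Dn t t') + ww' * (Kv * Dn t t') = Kv * Dn t t' by rewrite -mulrDl h3 mul1r.
  have e3 : 2 * Kv * M * Kv * `|t - t'| = 2 * (Kv * (M * (`|t - t'| * Kv))) by ring.
  rewrite e3; lra.
have monoAB : forall (ww ww' : R), 0 <= ww -> 0 <= ww' -> ww + ww' = 1 ->
  forall t1 t2, 0 <= t1 -> t1 <= t2 -> t2 <= 1 ->
  (ww * P t1 + ww' * Q t1) + sg * V * (t2 - t1) <= ww * P t2 + ww' * Q t2.
  move=> ww ww' h1 h2 h3 t1 t2 ht1 ht12 ht2.
  have [hP hQ] := monoPQ ht1 ht12 ht2.
  have := ler_wpM2l h1 hP; have := ler_wpM2l h2 hQ.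
  have e : sg * V * (t2 - t1) = (ww + ww') * (sg * V * (t2 - t1)) by rewrite h3 mul1r.
  move=> a1 a2; lra.
have hww' : w' + w = 1 by rewrite addrC.
apply: (mono_switch hKK PhiAB (monoAB _ _ hw hw' hww) (monoAB _ _ hw' hw hww')).
  exact: (lipAB _ _ hw hw' hww).
exact: (lipAB _ _ hw' hw hww').
Qed.

End Main.

Section Final.
Variable R : realType.
Variable n : nat.

Lemma eq_grads (g1 g2 : 'I_n -> itv R) : inormn (igHn g1 g2) <= 0 ->
  forall i, ilo (g1 i) = ilo (g2 i) /\ ihi (g1 i) = ihi (g2 i).
Proof.
move=> h i.
have h1 : inorm (igH (g1 i) (g2 i)) <= 0.
  apply: (le_trans _ h); rewrite /inormn.
  apply: (sum_ge_one (f := fun i => inorm (igHn g1 g2 i))) => j; apply: inorm_ge0.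
have a1 := le_trans (dist_lo (g1 i) (g2 i)) h1.
have a2 := le_trans (dist_hi (g1 i) (g2 i)) h1.
split; apply/eqP; rewrite -subr_eq0 -normr_le0 //.
Qed.

Lemma Wdiff_bound (w w' : R) (g1 g2 : 'I_n -> itv R) : 0 <= w -> 0 <= w' -> w + w' = 1 ->
  enorm (Wmap w w' g1 - Wmap w w' g2) ^+ 2 <= inormn (igHn g1 g2) ^+ 2.
Proof.
move=> hw hw' hww.
rewrite enorm_sq.
have e : forall i, (Wmap w w' g1 - Wmap w w' g2) 0 i =
   w * (ilo (g1 i) - ilo (g2 i)) + w' * (ihi (g1 i) - ihi (g2 i)).
  by move=> i; rewrite !mxE; ring.
have hb : forall i, `|(Wmap w w' g1 - Wmap w w' g2) 0 i| <= inorm (igHn g1 g2 i).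
  move=> i; rewrite e; apply: (le_trans (ler_normD _ _)); rewrite !normrM (ger0_norm hw) (ger0_norm hw').
  have := ler_wpM2l hw (dist_lo (g1 i) (g2 i)); have := ler_wpM2l hw' (dist_hi (g1 i) (g2 i)).
  have e2 : inorm (igHn g1 g2 i) = (w + w') * inorm (igHn g1 g2 i) by rewrite hww mul1r.
  rewrite /igHn in e2 *; move=> a1 a2; lra.
apply: (le_trans (y := (\sum_(i < n) `|(Wmap w w' g1 - Wmap w w' g2) 0 i|) ^+ 2)).
  have -> : \sum_(i < n) (Wmap w w' g1 - Wmap w w' g2) 0 i ^+ 2 =
            \sum_(i < n) `|(Wmap w w' g1 - Wmap w w' g2) 0 i| ^+ 2.
    by apply: eq_bigr => i _; rewrite real_normK ?num_real.
  by apply: sum_sq_le => i; apply: normr_ge0.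
have h0 : 0 <= \sum_(i < n) `|(Wmap w w' g1 - Wmap w w' g2) 0 i| by apply: sumr_ge0 => i _.
have h1 : \sum_(i < n) `|(Wmap w w' g1 - Wmap w w' g2) 0 i| <= inormn (igHn g1 g2).
  by apply: ler_sum => i _; apply: hb.
rewrite !expr2; apply: ler_pM => //.
Qed.

End Final.

Theorem lemma5p6 (R : realType) (n : nat) (w w' : R)
  (X : 'rV[R]_n -> Prop) (F : 'rV[R]_n -> itv R) :
  0 <= w <= 1 -> 0 <= w' <= 1 -> w + w' = 1 ->
  (exists x0, X x0) -> convex_set X ->
  strongly_convex_on X F ->
  (forall x, X x -> gH_differentiable_at F x) ->
  gH_Lipschitz_grad_on X F ->
  exists sigma L : R, [/\ 0 < sigma, 0 < L &
    forall x y gx gy, X x -> X y -> is_grad F x gx -> is_grad F y gy ->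
      dotv (Wmap w w' gx - Wmap w w' gy) (x - y)
        >= sigma / L ^+ 2 * enorm (Wmap w w' gx - Wmap w w' gy) ^+ 2].
Proof.
move=> /andP [hw0 hw1] /andP [hw'0 hw'1] hww _ hX hSCo hgh [M hM hLip].
have [sg hsg hSC] := SC_lohi hX hSCo.
exists sg, M; split => // x y gx gy hx hy hgx hgy.
have hc : forall t : R, exists c0 : 'I_n -> itv R, 0 <= t <= 1 -> GHP F (y + t *: (x - y)) c0.
  move=> t; case: (pselect (0 <= t <= 1)) => ht.
    have e : y + t *: (x - y) = t *: x + (1 - t) *: y by apply/matrixP => a b; rewrite !mxE; ring.
    have [c0 hc0] := gh_GHP (hgh _ (eq_ind_r X (hX x y t hx hy ht) e)).
    by exists c0.
  by exists (fun _ => izero R).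
case: (choice hc) => c hcP.
have hm := final_mono hw0 hw'0 hww hsg hM hSC hLip hX hx hy hcP.
rewrite /= in hm.
have ex : y + 1 *: (x - y) = x by rewrite scale1r addrC subrK.
have ey : y + 0 *: (x - y) = y by rewrite scale0r addr0.
have h01 : 0 <= (1 : R) <= 1 by rewrite ler01 lexx.
have h00 : 0 <= (0 : R) <= 1 by rewrite lexx ler01.
have g1 := GHP_grad (hcP 1 h01); rewrite ex in g1.
have g0 := GHP_grad (hcP 0 h00); rewrite ey in g0.
have enorm0 : enorm (0 : 'rV[R]_n) = 0.
  by rewrite /enorm big1 ?sqrtr0 // => i _; rewrite mxE expr0n.
have Hz : forall g gg z, X z -> is_grad F z gg -> is_grad F z g -> inormn (igHn gg g) <= 0.
  move=> g gg z hz hgg hg; have := hLip z z gg g hz hz hgg hg.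
  by rewrite subrr enorm0 mulr0.
have E1 := eq_grads (Hz _ _ _ hx hgx g1).
have E0 := eq_grads (Hz _ _ _ hy hgy g0).
set S1 := \sum_(i < n) (x - y) 0 i * (w * ilo (gx i) + w' * ihi (gx i)).
set S0 := \sum_(i < n) (x - y) 0 i * (w * ilo (gy i) + w' * ihi (gy i)).
have e1 : \sum_(i < n) (x - y) 0 i * (w * ilo (c 1 i) + w' * ihi (c 1 i)) = S1.
  by apply: eq_bigr => i _; rewrite -(E1 i).1 -(E1 i).2.
have e0 : \sum_(i < n) (x - y) 0 i * (w * ilo (c 0 i) + w' * ihi (c 0 i)) = S0.
  by apply: eq_bigr => i _; rewrite -(E0 i).1 -(E0 i).2.
rewrite e1 e0 in hm.
have ed : dotv (Wmap w w' gx - Wmap w w' gy) (x - y) = S1 - S0.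
  rewrite /dotv /S1 /S0 -sumrB; apply: eq_bigr => i _; rewrite !mxE; ring.
rewrite ed.
have hWb := Wdiff_bound gx gy hw0 hw'0 hww.
have hL := hLip x y gx gy hx hy hgx hgy.
have hn0 : 0 <= inormn (igHn gx gy) by apply: sumr_ge0 => i _; apply: inorm_ge0.
have hsq : inormn (igHn gx gy) ^+ 2 <= (M * enorm (x - y)) ^+ 2.
  by rewrite !expr2; apply: ler_pM.
have hq : 0 <= sg / M ^+ 2 by rewrite divr_ge0 // ?sqr_ge0 // ltW.
have h3 : sg / M ^+ 2 * enorm (Wmap w w' gx - Wmap w w' gy) ^+ 2 <= sg / M ^+ 2 * (M * enorm (x - y)) ^+ 2.
  by rewrite ler_wpM2l //; apply: le_trans hWb hsq.
have e4 : sg / M ^+ 2 * (M * enorm (x - y)) ^+ 2 = sg * enorm (x - y) ^+ 2.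
  by field; rewrite gt_eqF.
rewrite e4 in h3; lra.
Qed.
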